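(* Let $R$ be a ring and $(P,Q,\psi)$ an $R$-system. (a) The Toeplitz ring $\mathcal{T}_{(P,Q,\psi)}=\bigoplus_{i\in\mathbb{Z}}\mathcal{T}_i$ is semi-saturated. (b) If $(S,T,\sigma,B)$ is any graded covariant representation of $(P,Q,\psi)$, then $B=\bigoplus_{i\in\mathbb{Z}}B_i$ is semi-saturated.
   Context: For additive subsets $X,Y$ of a ring, $XY$ is the additive subgroup generated by products, and $X^n$ similarly. A $\mathbb{Z}$-graded ring $A=\bigoplus_iA_i$ is semi-saturated if $A_n=(A_1)^n$ and $A_{-n}=(A_{-1})^n$ for all $n>0$. An $R$-system is a triple $(P,Q,\psi)$ with $P,Q$ $R$-bimodules and $\psi:P\otimes_RQ\to R$ an $R$-bimodule homomorphism. Put $P^{\otimes0}=Q^{\otimes0}=R$, $Q^{\otimes n}=Q^{\otimes(n-1)}\otimes_RQ$, $P^{\otimes n}=P\otimes_RP^{\otimes(n-1)}$. A covariant representation of $(P,Q,\psi)$ is a tuple $(S,T,\sigma,B)$ with $B$ a ring, $S:P\to B$, $T:Q\to B$ additive maps, $\sigma:R\to B$ a ring homomorphism, with $S(pr)=S(p)\sigma(r)$, $S(rp)=\sigma(r)S(p)$, $T(qr)=T(q)\sigma(r)$, $T(rq)=\sigma(r)T(q)$, $\sigma(\psi(p\otimes q))=S(p)T(q)$; it is graded if $B$ is generated as a ring by $\sigma(R)\cup S(P)\cup T(Q)$ and $B$ carries a $\mathbb{Z}$-grading with $\sigma(R)\subseteq B_0$, $T(Q)\subseteq B_1$, $S(P)\subseteq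 B_{-1}$. The Toeplitz representation $(\iota_P,\iota_Q,\iota_R,\mathcal{T}_{(P,Q,\psi)})$ is the universal covariant representation (every graded covariant representation $(S,T,\sigma,B)$ receives a unique graded ring epimorphism $\eta$ with $\eta\iota_P=S$, $\eta\iota_Q=T$, $\eta\iota_R=\sigma$); its grading is $\mathcal{T}_i$ = additive group generated by elements $\iota_Q^m(q)\iota_P^n(p)$ and $\iota_R(r)\iota_Q^m(q)\iota_P^n(p)$ with $q\in Q^{\otimes m}$, $p\in P^{\otimes n}$, $m-n=i$, where $\iota_Q^m(q_1\otimes\cdots\otimes q_m)=\iota_Q(q_1)\cdots\iota_Q(q_m)$, similarly $\iota_P^n$, and $\iota^0=\iota_R$. *)

(* Defs.v *)
(* Rings here are NOT assumed unital (as in the paper's setting),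
   so we define a minimal structure of (associative, not necessarily unital) rings
   on top of MathComp's zmodType, bimodules over such rings, gradings, etc. *)
From HB Require Import structures.
From mathcomp Require Import all_boot all_order all_algebra.
Set Implicit Arguments. Unset Strict Implicit. Unset Printing Implicit Defensive.
Import Order.TTheory GRing.Theory Num.Theory.
Local Open Scope ring_scope.

Record nuRing := NuRing {
  nr_sort :> zmodType;
  nr_mul : nr_sort -> nr_sort -> nr_sort;
  nr_mulA : associative nr_mul;
  nr_mulDl : left_distributive nr_mul +%R;
  nr_mulDr : right_distributive nr_mul +%R }.

Record bimod (R : nuRing) := Bimod {
  bm_sort :> zmodType;
  lact : R -> bm_sort -> bm_sort;
  ract : bm_sort -> R -> bm_sort;
  lactDl : forall r s m, lact (r + s) m = lact r m + lact s m;
  lactDr : forall r m n, lact r (m + n) = lact r m + lact r n;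
  lactA : forall r s m, lact (nr_mul r s) m = lact r (lact s m);
  ractDl : forall m n r, ract (m + n) r = ract m r + ract n r;
  ractDr : forall m r s, ract m (r + s) = ract m r + ract m s;
  ractA : forall m r s, ract m (nr_mul r s) = ract (ract m r) s;
  lractA : forall r m s, lact r (ract m s) = ract (lact r m) s }.

(* An R-system (P, Q, psi): psi : P (x)_R Q -> R an R-bimodule homomorphism.
   By the universal property of the balanced tensor product, such a psi is the
   same as a biadditive R-balanced map P -> Q -> R which is left R-linear in
   the first and right R-linear in the second variable; psi p q stands for
   psi (p (x) q). *)
Definition Rsystem_map (R : nuRing) (P Q : bimod R) (psi : P -> Q -> R) : Prop :=
  [/\ (forall p p' q, psi (p + p') q = psi p q + psi p' q),
      (forall p q q', psi p (q + q') = psi p q + psi p q'),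
      (forall p r q, psi (ract p r) q = psi p (lact r q)),
      (forall r p q, psi (lact r p) q = nr_mul r (psi p q)) &
      (forall p q r, psi p (ract q r) = nr_mul (psi p q) r)].

Inductive addgen (B : zmodType) (Z : B -> Prop) : B -> Prop :=
  | ag_in x : Z x -> addgen Z x
  | ag_0 : addgen Z 0
  | ag_add x y : addgen Z x -> addgen Z y -> addgen Z (x + y)
  | ag_opp x : addgen Z x -> addgen Z (- x).

Definition prodset (B : nuRing) (X Y : B -> Prop) : B -> Prop :=
  addgen (fun z => exists x y, [/\ X x, Y y & z = nr_mul x y]).

(* setpow X n = X^n for n > 0 (X^1 = X, X^(n+1) = X^n X);
   the value at n = 0 is a dummy (X) and is never used. *)
Fixpoint setpow (B : nuRing) (X : B -> Prop) (n : nat) : B -> Prop :=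
  match n with
  | 0 | 1 => X
  | m.+1 => prodset (setpow X m) X
  end.

Inductive ringgen (B : nuRing) (X : B -> Prop) : B -> Prop :=
  | rg_in x : X x -> ringgen X x
  | rg_0 : ringgen X 0
  | rg_add x y : ringgen X x -> ringgen X y -> ringgen X (x + y)
  | rg_opp x : ringgen X x -> ringgen X (- x)
  | rg_mul x y : ringgen X x -> ringgen X y -> ringgen X (nr_mul x y).

Definition is_Zgrading (B : nuRing) (G : int -> B -> Prop) : Prop :=
  [/\ (forall i, G i 0 /\ (forall x y, G i x -> G i y -> G i (x - y))),
      (forall i j x y, G i x -> G j y -> G (i + j) (nr_mul x y)),
      (forall b : B, exists (N : nat) (f : int -> B),
          (forall i, G i (f i)) /\ b = \sum_(k < (N + N).+1) f (k%:Z - N%:Z)) &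
      (forall (N : nat) (f : int -> B), (forall i, G i (f i)) ->
          \sum_(k < (N + N).+1) f (k%:Z - N%:Z) = 0 ->
          forall k : 'I_(N + N).+1, f (k%:Z - N%:Z) = 0)].

Definition semi_saturated (B : nuRing) (G : int -> B -> Prop) : Prop :=
  forall n : nat, (0 < n)%N ->
    (forall b, G n%:Z b <-> setpow (G 1) n b) /\
    (forall b, G (- n%:Z) b <-> setpow (G (-1)) n b).

Definition ring_hom (R B : nuRing) (f : R -> B) : Prop :=
  (forall x y, f (x + y) = f x + f y) /\ (forall x y, f (nr_mul x y) = nr_mul (f x) (f y)).

Definition covariant_rep (R : nuRing) (P Q : bimod R) (psi : P -> Q -> R)
    (B : nuRing) (S : P -> B) (T : Q -> B) (sigma : R -> B) : Prop :=
  (forall p p', S (p + p') = S p + S p') /\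
  (forall q q', T (q + q') = T q + T q') /\
  ring_hom sigma /\
  (forall p r, S (ract p r) = nr_mul (S p) (sigma r)) /\
  (forall r p, S (lact r p) = nr_mul (sigma r) (S p)) /\
  (forall q r, T (ract q r) = nr_mul (T q) (sigma r)) /\
  (forall r q, T (lact r q) = nr_mul (sigma r) (T q)) /\
  (forall p q, sigma (psi p q) = nr_mul (S p) (T q)).

Definition graded_covariant_rep (R : nuRing) (P Q : bimod R) (psi : P -> Q -> R)
    (B : nuRing) (G : int -> B -> Prop) (S : P -> B) (T : Q -> B) (sigma : R -> B) : Prop :=
  covariant_rep psi S T sigma /\
  (forall b, ringgen (fun x => (exists r, x = sigma r) \/ (exists p, x = S p)
                               \/ (exists q, x = T q)) b) /\
  is_Zgrading G /\
  (forall r, G 0 (sigma r)) /\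
  (forall q, G 1 (T q)) /\
  (forall p, G (-1) (S p)).

Fixpoint wprod (B : nuRing) (X : Type) (f : X -> B) (x0 : X) (s : seq X) : B :=
  match s with
  | [::] => f x0
  | y :: s' => nr_mul (f x0) (wprod f y s')
  end.

(* mono f g m x : x = iota^m(e) for an elementary tensor e of X^{(x)m}, where
   iota^0 = g on X^{(x)0} = R, and iota^m(x1 (x) .. (x) xm) = f x1 ... f xm.
   Since iota^m is additive and X^{(x)m} is additively generated by elementary
   tensors, the additive group generated by the iota^m(q) iota^n(p) is the one
   generated by these values on elementary tensors. *)
Definition mono (R B : nuRing) (X : Type) (f : X -> B) (g : R -> B) (m : nat) (x : B) : Prop :=
  match m with
  | 0 => exists r, x = g r
  | k.+1 => exists x0 s, size s = k /\ x = wprod f x0 s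
  end.

Definition toeplitz_comp (R : nuRing) (P Q : bimod R) (Tor : nuRing)
    (iP : P -> Tor) (iQ : Q -> Tor) (iR : R -> Tor) (i : int) : Tor -> Prop :=
  addgen (fun z => exists (m n : nat) (a c : Tor),
     [/\ m%:Z - n%:Z = i, mono iQ iR m a, mono iP iR n c &
         (z = nr_mul a c \/ exists r, z = nr_mul (iR r) (nr_mul a c))]).

Definition is_toeplitz_rep (R : nuRing) (P Q : bimod R) (psi : P -> Q -> R)
    (Tor : nuRing) (iP : P -> Tor) (iQ : Q -> Tor) (iR : R -> Tor) : Prop :=
  graded_covariant_rep psi (toeplitz_comp iP iQ iR) iP iQ iR /\
  forall (B : nuRing) (G : int -> B -> Prop) (S : P -> B) (T : Q -> B) (sigma : R -> B),
    graded_covariant_rep psi G S T sigma ->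
    exists eta : Tor -> B,
      let good (e : Tor -> B) :=
        ring_hom e /\ (forall b, exists x, e x = b) /\
        (forall i x, toeplitz_comp iP iQ iR i x -> G i (e x)) /\
        (forall p, e (iP p) = S p) /\ (forall q, e (iQ q) = T q) /\
        (forall r, e (iR r) = sigma r) in
      good eta /\ forall eta', good eta' -> forall x, eta' x = eta x.

(* Main.v *)
Require Import Defs.
From HB Require Import structures.
From mathcomp Require Import all_boot all_order all_algebra zify.
Set Implicit Arguments. Unset Strict Implicit. Unset Printing Implicit Defensive.
Import GRing.Theory.
Local Open Scope ring_scope.

Definition subg (B : zmodType) (W : B -> Prop) :=
  [/\ W 0, (forall x y, W x -> W y -> W (x + y)) & (forall x, W x -> W (- x))].

Lemma addgen_sub (B : zmodType) (X : B -> Prop) : subg (addgen X).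
Proof. split; [exact: ag_0| exact: ag_add | exact: ag_opp]. Qed.

Lemma addgen_min (B : zmodType) (X W : B -> Prop) :
  subg W -> (forall x, X x -> W x) -> forall x, addgen X x -> W x.
Proof.
move=> [W0 WD WN] XW x; elim.
- exact: XW.
- exact: W0.
- by move=> a b _ ha _ hb; apply: WD.
- by move=> a _ ha; apply: WN.
Qed.

Section NR.
Variable B : nuRing.
Lemma nmul0r (x : B) : nr_mul 0 x = 0.
Proof.
have h := nr_mulDl 0 0 x; rewrite addr0 in h.
have := congr1 (fun z => z - nr_mul 0 x) h; rewrite /= addrK subrr => h2; exact: esym h2.
Qed.
Lemma nmulr0 (x : B) : nr_mul x 0 = 0.
Proof.
have h := nr_mulDr x 0 0; rewrite addr0 in h.
have := congr1 (fun z => z - nr_mul x 0) h; rewrite /= addrK subrr => h2; exact: esym h2.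
Qed.
Lemma nmulNr (x y : B) : nr_mul (- x) y = - nr_mul x y.
Proof.
have : nr_mul (- x + x) y = 0 by rewrite addNr nmul0r.
by rewrite nr_mulDl => /eqP; rewrite addr_eq0 => /eqP.
Qed.
Lemma nmulrN (x y : B) : nr_mul x (- y) = - nr_mul x y.
Proof.
have : nr_mul x (- y + y) = 0 by rewrite addNr nmulr0.
by rewrite nr_mulDr => /eqP; rewrite addr_eq0 => /eqP.
Qed.

Lemma subg_rmul (W : B -> Prop) g : subg W -> subg (fun x => W (nr_mul x g)).
Proof.
move=> [W0 WD WN]; split; first by rewrite nmul0r.
  by move=> x y hx hy; rewrite nr_mulDl; apply: WD.
by move=> x hx; rewrite nmulNr; apply: WN.
Qed.

Lemma prodset_in (X Y : B -> Prop) x y : X x -> Y y -> prodset X Y (nr_mul x y).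
Proof. by move=> hx hy; apply: ag_in; exists x, y. Qed.
End NR.

Section Grad.
Variable B : nuRing.
Variable G : int -> B -> Prop.
Hypothesis HG0 : forall i, subg (G i).
Hypothesis HGm : forall i j x y, G i x -> G j y -> G (i + j) (nr_mul x y).

Lemma Geq i j x : i = j -> G i x -> G j x. Proof. by move->. Qed.

Lemma setpow_sub m : subg (setpow (G 1) m.+1).
Proof. by case: m => [|m]; [exact: HG0 | exact: addgen_sub]. Qed.

Lemma setpowG m x : setpow (G 1) m.+1 x -> G m.+1%:Z x.
Proof.
elim: m x => [|m IH] x //.
apply: addgen_min; first exact: HG0.
move=> z [a [b [ha hb ->]]].
apply: (Geq (i := m.+1%:Z + 1)); first lia.
by apply: HGm => //; apply: IH.
Qed.

Lemma setpow_G0 m x g : setpow (G 1) m.+1 x -> G 0 g -> setpow (G 1) m.+1 (nr_mul x g).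
Proof.
case: m => [|m] hx hg.
  by apply: (Geq (i := 1 + 0)); [lia | exact: HGm].
move: x hx; apply: addgen_min; first exact: subg_rmul (addgen_sub _).
move=> z [a [b [ha hb ->]]].
rewrite -nr_mulA; apply: prodset_in => //.
by apply: (Geq (i := 1 + 0)); [lia | exact: HGm].
Qed.

Lemma setpow_Gm1 m x g : setpow (G 1) m.+2 x -> G (-1) g -> setpow (G 1) m.+1 (nr_mul x g).
Proof.
move=> hx hg; move: x hx; apply: addgen_min; first exact: subg_rmul (setpow_sub _).
move=> z [a [b [ha hb ->]]].
rewrite -nr_mulA; apply: setpow_G0 => //.
by apply: (Geq (i := 1 + -1)); [lia | exact: HGm].
Qed.
End Grad.

Definition Grev (B : nuRing) (G : int -> B -> Prop) := fun i => G (- i).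

Definition K (B : nuRing) (G : int -> B -> Prop) (i : int) : B -> Prop :=
  match i with
  | Posz 0 => G 0
  | Posz m.+1 => setpow (G 1) m.+1
  | Negz m => setpow (G (-1)) m.+1
  end.

Section KS.
Variable B : nuRing.
Variable G : int -> B -> Prop.
Hypothesis HG0 : forall i, subg (G i).
Hypothesis HGm : forall i j x y, G i x -> G j y -> G (i + j) (nr_mul x y).

Lemma HG0r : forall i, subg (Grev G i).
Proof. by move=> i; apply: HG0. Qed.
Lemma HGmr : forall i j x y, Grev G i x -> Grev G j y -> Grev G (i + j) (nr_mul x y).
Proof.
move=> i j x y hx hy; rewrite /Grev opprD; exact: HGm.
Qed.

Lemma KG i x : K G i x -> G i x.
Proof.
case: i => [[|m]|m] //.
  move=> h; exact: (setpowG HG0 HGm h).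
move=> h; have := setpowG HG0r HGmr h; rewrite /Grev.
by apply: Geq; lia.
Qed.

Lemma Ksub i : subg (K G i).
Proof.
case: i => [[|m]|m]; first exact: HG0.
  exact: (setpow_sub HG0 m).
exact: (setpow_sub HG0r m).
Qed.

Lemma K0 i x g : K G i x -> G 0 g -> K G i (nr_mul x g).
Proof.
case: i => [[|m]|m] hx hg; unfold K in hx |- *.
- by apply: (Geq (i := 0 + 0)); [lia | exact: HGm].
- exact: (setpow_G0 HGm hx hg).
- have hg' : Grev G 0 g by rewrite /Grev oppr0.
  exact: (setpow_G0 HGmr hx hg').
Qed.

Lemma K1 i x g : K G i x -> G 1 g -> K G (i + 1) (nr_mul x g).
Proof.
case: i => [[|m]|[|m]] hx hg; unfold K in hx.
- have -> : (Posz 0 + 1 = 1) by lia.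
  unfold K.
  by apply: (Geq (i := 0 + 1)); [lia | exact: HGm].
- have -> : (Posz m.+1 + 1 = Posz m.+2) by lia.
  unfold K.
  exact: prodset_in.
- have -> : (Negz 0 + 1 = 0) by lia.
  unfold K.
  by apply: (Geq (i := -1 + 1)); [lia | exact: HGm].
- have -> : (Negz m.+1 + 1 = Negz m) by lia.
  unfold K.
  have hg' : Grev G (-1) g by rewrite /Grev opprK.
  exact: (setpow_Gm1 HG0r HGmr hx hg').
Qed.

Lemma Km1 i x g : K G i x -> G (-1) g -> K G (i - 1) (nr_mul x g).
Proof.
case: i => [[|[|m]]|m] hx hg; unfold K in hx.
- have -> : (Posz 0 - 1 = Negz 0) by lia.
  unfold K.
  by apply: (Geq (i := 0 + -1)); [lia | exact: HGm].
- have -> : (Posz 1 - 1 = 0) by lia.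
  unfold K.
  by apply: (Geq (i := 1 + -1)); [lia | exact: HGm].
- have -> : (Posz m.+2 - 1 = Posz m.+1) by lia.
  unfold K.
  exact: (setpow_Gm1 HG0 HGm hx hg).
- have -> : (Negz m - 1 = Negz m.+1) by lia.
  unfold K.
  exact: (prodset_in (X := setpow (G (-1)) m.+1)).
Qed.

Definition U (x : B) := exists i, K G i x.

Lemma Ugen y : addgen U y -> (forall i x, K G i x -> U (nr_mul x y)) ->
  addgen U y /\ (forall x, addgen U x -> addgen U (nr_mul x y)).
Proof.
move=> hy hK; split => //.
apply: addgen_min; first exact: subg_rmul (addgen_sub _).
move=> x [i hx]; apply: ag_in; exact: hK hx.
Qed.

Lemma Umul x y : addgen U x ->
  (forall z, addgen U z -> addgen U (nr_mul z y)) -> addgen U (nr_mul x y).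
Proof. by move=> hx h; apply: h. Qed.

Variables (R : nuRing) (P Q : bimod R) (S : P -> B) (T : Q -> B) (sigma : R -> B).
Hypothesis Hs : forall r, G 0 (sigma r).
Hypothesis Ht : forall q, G 1 (T q).
Hypothesis Hp : forall p, G (-1) (S p).

Lemma rg_U y : ringgen (fun x => (exists r, x = sigma r) \/ (exists p, x = S p)
                               \/ (exists q, x = T q)) y ->
  addgen U y /\ (forall x, addgen U x -> addgen U (nr_mul x y)).
Proof.
elim.
- move=> x [[r ->]|[[p ->]|[q ->]]]; apply: Ugen.
  + by apply: ag_in; exists 0; exact: Hs.
  + by move=> i z hz; exists i; exact: (K0 hz (Hs r)).
  + by apply: ag_in; exists (Negz 0); exact: Hp.
  + by move=> i z hz; exists (i - 1); exact: (Km1 hz (Hp p)).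
  + by apply: ag_in; exists 1; exact: Ht.
  + by move=> i z hz; exists (i + 1); exact: (K1 hz (Ht q)).
- by split; [exact: ag_0 | move=> x _; rewrite nmulr0; exact: ag_0].
- move=> x y0 _ [hx1 hx2] _ [hy1 hy2]; split; first exact: ag_add.
  by move=> z hz; rewrite nr_mulDr; apply: ag_add; [apply: hx2|apply: hy2].
- move=> x _ [hx1 hx2]; split; first exact: ag_opp.
  by move=> z hz; rewrite nmulrN; apply: ag_opp; apply: hx2.
- move=> x y0 _ [hx1 hx2] _ [hy1 hy2]; split; first exact: hy2.
  by move=> z hz; rewrite nr_mulA; apply: hy2; apply: hx2.
Qed.

Lemma addgen_list x : addgen U x -> exists s : seq (int * B),
  (forall y, y \in s -> K G y.1 y.2) /\ x = \sum_(y <- s) y.2.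
Proof.
elim.
- move=> z [i hz]; exists [:: (i, z)]; split; last by rewrite big_seq1.
  by move=> y; rewrite inE => /eqP ->.
- by exists [::]; split => //; rewrite big_nil.
- move=> a b _ [s1 [h1 ->]] _ [s2 [h2 ->]]; exists (s1 ++ s2); split.
    by move=> y; rewrite mem_cat => /orP [] ?; [apply: h1|apply: h2].
  by rewrite big_cat.
- move=> a _ [s [h ->]]; exists (map (fun y => (y.1, - y.2)) s); split.
    move=> y /mapP [z zs ->] /=; have [_ _ KN] := Ksub z.1; apply: KN; exact: h.
  by rewrite big_map sumrN.
Qed.

Hypothesis Hdir : forall (N : nat) (f : int -> B), (forall i, G i (f i)) ->
          \sum_(k < (N + N).+1) f (k%:Z - N%:Z) = 0 ->
          forall k : 'I_(N + N).+1, f (k%:Z - N%:Z) = 0.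

Lemma sum_single (N : nat) (i : int) (c : B) : (absz i <= N)%N ->
  \sum_(k < (N + N).+1) (if k%:Z - N%:Z == i then c else 0) = c.
Proof.
move=> hi.
have hlt : (absz (i + N%:Z)%R < (N + N).+1)%N by lia.
  unfold K.
rewrite (bigD1 (inord (absz (i + N%:Z)%R))) //= inordK //.
have -> : ((absz (i + N%:Z)%R)%:Z - N%:Z == i) by apply/eqP; lia.
rewrite big1 ?addr0 // => k hk.
case: eqP => // E; exfalso; move/negP: hk; apply; apply/eqP/val_inj => /=.
rewrite inordK //; lia.
Qed.

Lemma direct s b n : (forall y, y \in s -> K G y.1 y.2) -> G n b ->
  b = \sum_(y <- s) y.2 -> K G n b.
Proof.
move=> Hsl Hb Eb.
pose N := (absz n + \sum_(y <- s) absz y.1)%N.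
have HN : forall y, y \in s -> (absz y.1 <= N)%N.
  move=> y ys; rewrite /N (big_rem y) //=.
  apply: leq_trans (leq_addl _ _); exact: leq_addr.
have HnN : (absz n <= N)%N by exact: leq_addr.
pose c i := \sum_(y <- s | y.1 == i) y.2.
have Kc i : K G i (c i).
  have [K0' KD _] := Ksub i.
  rewrite /c big_seq_cond; apply: big_ind => //.
  by move=> y /andP [ys /eqP <-]; apply: Hsl.
pose f i := c i - (if i == n then b else 0).
have Hf i : G i (f i).
  have [G0 GD GN] := HG0 i.
  apply: GD; first exact: KG.
  apply: GN; case: eqP => [->|] //.
have Hsum : \sum_(k < (N + N).+1) f (k%:Z - N%:Z) = 0.
  rewrite /f sumrB sum_single //.
  rewrite /c; under eq_bigr => k _ do rewrite big_mkcond /=.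
  rewrite exchange_big /= Eb.
  rewrite (eq_big_seq (fun y => y.2)) ?subrr // => y ys.
  rewrite -{2}(sum_single y.2 (HN y ys)).
  by apply: eq_bigr => k _; rewrite eq_sym.
have := Hdir Hf Hsum (inord (absz (n + N%:Z)%R)).
have -> : (inord (absz (n + N%:Z)%R) : 'I_(N + N).+1)%:Z - N%:Z = n.
  rewrite inordK; lia.
rewrite /f eqxx => /eqP; rewrite subr_eq0 => /eqP <-; exact: Kc.
Qed.

End KS.

Theorem mainTheorem12 (R : nuRing) (P Q : bimod R) (psi : P -> Q -> R)
    (Hpsi : Rsystem_map psi) :
  (* (a) the Toeplitz ring is semi-saturated *)
  (forall (Tor : nuRing) (iP : P -> Tor) (iQ : Q -> Tor) (iR : R -> Tor),
      is_toeplitz_rep psi iP iQ iR ->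
      semi_saturated (toeplitz_comp iP iQ iR)) /\
  (* (b) any graded covariant representation gives a semi-saturated ring *)
  (forall (B : nuRing) (G : int -> B -> Prop) (S : P -> B) (T : Q -> B) (sigma : R -> B),
      graded_covariant_rep psi G S T sigma -> semi_saturated G).
Proof.
have partb : forall (B : nuRing) (G : int -> B -> Prop) (S : P -> B) (T : Q -> B) (sigma : R -> B),
      graded_covariant_rep psi G S T sigma -> semi_saturated G.
  move=> B G S T sigma [_ [Hgen [[Hg1 Hg2 _ Hg4] [Hs [Ht Hp]]]]].
  have HG0 : forall i, subg (G i).
    move=> i; have [G0 GB] := Hg1 i; split => //.
      move=> x y hx hy; rewrite -[y]opprK -[- y]add0r; apply: (GB) => //; exact: GB.
    move=> x hx; rewrite -(add0r (- x)); exact: GB.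
  have main : forall (n : int) b, G n b -> K G n b.
    move=> n b hb.
    have [hU _] := rg_U HG0 Hg2 Hs Ht Hp (Hgen b).
    have [s [hs Eb]] := addgen_list HG0 hU.
    exact: (direct HG0 Hg2 Hg4 hs hb Eb).
  move=> [|m] // _; split => b; split.
  - exact: main.
  - move=> h; exact: (setpowG HG0 Hg2 h).
  - move=> hb; have := main _ _ hb.
    by have -> : (- (m.+1)%:Z = Negz m) by lia.
  unfold K.
  - move=> hb; have := KG HG0 Hg2 (i := Negz m) hb.
    by apply: Geq; lia.
split => //.
move=> Tor iP iQ iR [H _]; exact: partb H.
Qed.
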